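(* Let $T$ be a tournament of order $n \geq 3$. Then $\mathrm{sinv}_1(T) = \mathrm{sinv}'_1(T) = 0$ if $T$ is strong and $\mathrm{sinv}_1(T) = \mathrm{sinv}'_1(T) = 1$ otherwise. In particular, $m_1(n) = m'_1(n) = 1$ for all $n \geq 3$ and $M_1 = M'_1 = 1$.
   Context: A tournament is an orientation of a complete graph; it is strong if for every ordered pair of vertices $(u,v)$ there is a directed path from $u$ to $v$. For a digraph $D$ and $X \subseteq V(D)$, inverting $X$ means reversing the direction of every arc of $D$ with both endvertices in $X$. A digraph $D$ is $k$-arc-strong if for every partition $(V_1,V_2)$ of $V(D)$ into nonempty sets there are at least $k$ arcs from $V_1$ to $V_2$; it is $k$-strong if $|V(D)|\ge k+1$ and $D-S$ is strong for every $S\subseteq V(D)$ with $|S|<k$. $\mathrm{sinv}'_k(D)$ (resp. $\mathrm{sinv}_k(D)$) is the minimum number of sets whose successive inversion transforms $D$ into a $k$-arc-strong (resp. $k$-strong) digraph. For $n\ge 2k+1$, $m_k(n)=\max\{\mathrm{sinv}_k(T): T \text{ tournament of order } n\}$, $m'_k(n)=\max\{\mathrm{sinv}'_k(T): T \text{ tournament of order } n\}$, $M_k=\max\{\mathrm{sinv}_k(T): T \text{ tournament of order at least } 2k+1\}$, $M'_k=\max\{\mathrm{sinv}'_k(T): T \text{ tournament of order at least } 2k+1\}$. *)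

(* Defs.v *)
From mathcomp Require Import all_boot.
Set Implicit Arguments. Unset Strict Implicit. Unset Printing Implicit Defensive.

Section Digraphs.
Variable T : finType.

Definition tournament (D : rel T) : Prop :=
  (forall x, ~~ D x x) /\ (forall x y, x != y -> D x y (+) D y x).

Definition invert (D : rel T) (X : {set T}) : rel T :=
  fun x y => if (x \in X) && (y \in X) then D y x else D x y.

Definition invert_seq (D : rel T) (Xs : seq {set T}) : rel T :=
  foldl invert D Xs.

Definition strong (D : rel T) : Prop := forall u v, connect D u v.

Definition arc_strong (k : nat) (D : rel T) : Prop :=
  forall V1 : {set T}, V1 != set0 -> V1 != setT ->
    k <= #|[set p : T * T | [&& p.1 \in V1, p.2 \notin V1 & D p.1 p.2]]|.

Definition strong_minus (D : rel T) (S : {set T}) : Prop :=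
  forall u v, u \notin S -> v \notin S ->
    connect [rel x y | [&& D x y, x \notin S & y \notin S]] u v.

Definition vertex_strong (k : nat) (D : rel T) : Prop :=
  k.+1 <= #|T| /\ forall S : {set T}, #|S| < k -> strong_minus D S.

Definition sinv_is (P : rel T -> Prop) (D : rel T) (m : nat) : Prop :=
  (exists Xs : seq {set T}, size Xs = m /\ P (invert_seq D Xs)) /\
  (forall Xs : seq {set T}, P (invert_seq D Xs) -> m <= size Xs).

End Digraphs.

Definition sinv (k : nat) (T : finType) (D : rel T) (m : nat) : Prop :=
  sinv_is (vertex_strong k) D m.
Definition sinv' (k : nat) (T : finType) (D : rel T) (m : nat) : Prop :=
  sinv_is (arc_strong k) D m.

(* v is the maximum of sinv_k (resp. sinv'_k) over tournaments of order n
   (vertex set 'I_n, i.e. up to isomorphism). *)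
Definition m_is (s : nat -> forall T : finType, rel T -> nat -> Prop)
    (k n v : nat) : Prop :=
  (exists D : rel 'I_n, tournament D /\ s k _ D v) /\
  (forall (D : rel 'I_n) (w : nat), tournament D -> s k _ D w -> w <= v).

Definition M_is (s : nat -> forall T : finType, rel T -> nat -> Prop)
    (k v : nat) : Prop :=
  (exists n (D : rel 'I_n), (2 * k).+1 <= n /\ tournament D /\ s k _ D v) /\
  (forall n (D : rel 'I_n) (w : nat), (2 * k).+1 <= n ->
      tournament D -> s k _ D w -> w <= v).

(* Main.v *)
Require Import Defs.
From mathcomp Require Import all_boot.
Set Implicit Arguments. Unset Strict Implicit. Unset Printing Implicit Defensive.

Section Aux.
Variable T : finType.

Lemma path_closed (e : rel T) (P : pred T) :
  (forall a b, P a -> e a b -> P b) ->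
  forall p x, P x -> path e x p -> P (last x p).
Proof.
move=> H; elim=> [|y p IH] x Px //= /andP[exy py].
exact: IH (H _ _ Px exy) py.
Qed.

Lemma connect_closed' (e : rel T) (P : pred T) x y :
  (forall a b, P a -> e a b -> P b) -> P x -> connect e x y -> P y.
Proof.
move=> H Px /connectP[p pp ->]; exact: path_closed H p x Px pp.
Qed.

Lemma vs1 (D : rel T) : 2 <= #|T| -> (vertex_strong 1 D <-> strong D).
Proof.
move=> h2; split.
- move=> [_ H] u v.
  have := H set0; rewrite cards0 => /(_ isT u v); rewrite !inE => /(_ isT isT).
  suff -> : connect [rel x y | [&& D x y, x \notin set0 & y \notin set0]] u v = connect D u v by [].
  by apply: eq_connect => x y /=; rewrite !inE !andbT.
- move=> H; split=> // S; rewrite ltnS leqn0 => /eqP/cards0_eq -> u v _ _.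
  suff -> : connect [rel x y | [&& D x y, x \notin set0 & y \notin set0]] u v = connect D u v by [].
  by apply: eq_connect => x y /=; rewrite !inE !andbT.
Qed.

Lemma as1 (D : rel T) : arc_strong 1 D <-> strong D.
Proof.
split.
- move=> H u v; apply/negPn/negP => nc.
  have := H [set x | connect D u x].
  have ne : [set x | connect D u x] != set0.
    by apply/set0Pn; exists u; rewrite inE connect0.
  have nT : [set x | connect D u x] != setT.
    by apply/eqP => /setP /(_ v); rewrite !inE (negbTE nc).
  move=> /(_ ne nT) /card_gt0P [[a b]]; rewrite inE /= !inE.
  case/and3P => ua ub ab; case/negP: ub.
  exact: connect_trans ua (connect1 ab).
- move=> H V1 ne nT.
  case/set0Pn: ne => u uV; have : exists v, v \notin V1.
    apply/existsP; rewrite -negb_forall; apply: contra nT => /forallP h.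
    by apply/eqP/setP => x; rewrite inE h.
  case=> v vV.
  rewrite lt0n; apply/negP => /eqP /cards0_eq E.
  case/negP: vV.
  apply: (@connect_closed' D (fun x => x \in V1) u v) => // a b aV dab.
  apply/negPn/negP => bV.
  have : (a, b) \in [set p : T * T | [&& p.1 \in V1, p.2 \notin V1 & D p.1 p.2]].
    by rewrite inE /= aV bV dab.
  by rewrite E inE.
Qed.

Lemma sinv_uniq (P : rel T -> Prop) D m w :
  sinv_is P D m -> sinv_is P D w -> m = w.
Proof.
move=> [[X1 [s1 p1]] h1] [[X2 [s2 p2]] h2].
apply/eqP; rewrite eqn_leq; apply/andP; split.
- by rewrite -s2; apply: h1.
- by rewrite -s1; apply: h2.
Qed.

Variable D : rel T.
Hypothesis tD : tournament D.

Fixpoint ins x (s : seq T) : seq T :=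
  if s is a :: s' then (if D x a then x :: a :: s' else a :: ins x s')
  else [:: x].

Lemma ins_perm x s : perm_eq (ins x s) (x :: s).
Proof.
elim: s => [|a s IH] //=; case: ifP => // _.
apply: (@perm_trans _ (a :: x :: s)); first by rewrite perm_cons.
by have := perm_catCA [:: a] [:: x] s (x :: a :: s); rewrite /= perm_refl => ->.
Qed.

Lemma ins_sorted x s : x \notin s -> sorted D s -> sorted D (ins x s).
Proof.
elim: s => [|a s IH] //=; rewrite in_cons negb_or => /andP[xa xs] ps.
case: ifP => Dxa; first by rewrite /= Dxa.
have Dax : D a x.
  by have := (proj2 tD) x a xa; rewrite Dxa.
move: ps IH; case: s xs => [|b s] xs //=; first by rewrite Dax.
move=> /andP[Dab ps] IH.
have := IH xs ps; case: ifP => Dxb /=.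
- by rewrite Dax.
- by rewrite Dab.
Qed.

Lemma ham : exists s, perm_eq s (enum T) /\ sorted D s.
Proof.
have : uniq (enum T) by apply: enum_uniq.
elim: (enum T) => [|x l IH]; first by exists [::].
rewrite /= => /andP[xl ul]; case: (IH ul) => s [ps ss].
exists (ins x s); split.
- by apply: perm_trans (ins_perm x s) _; rewrite perm_cons.
- by apply: ins_sorted => //; rewrite (perm_mem ps).
Qed.

Lemma transfer (e e' : rel T) (P : pred T) :
  (forall x y, P x -> e x y -> e' x y) ->
  forall l a z, P a -> all P l -> path e a (rcons l z) -> path e' a (rcons l z).
Proof.
move=> H; elim=> [|b l IH] a z Pa /=.
- by move=> _; rewrite !andbT; apply: H.
- move=> /andP[Pb Pl] /andP[eab pl]; rewrite (H _ _ Pa eab) /=.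
  exact: IH.
Qed.

Lemma one_inv : 3 <= #|T| -> ~ strong D -> exists X, strong (invert D X).
Proof.
move=> h3 ns; case: ham => s [ps ss].
have us : uniq s by rewrite (perm_uniq ps) enum_uniq.
have ms : forall x, x \in s by move=> x; rewrite (perm_mem ps) mem_enum.
have sz : size s = #|T| by rewrite cardT (perm_size ps).
case: s ps ss us ms sz => [|v1 t] ps ss us ms sz; first by rewrite -sz in h3.
case/lastP: t ps ss us ms sz => [|m vn] ps ss us ms sz; first by rewrite -sz in h3.
case: m ps ss us ms sz => [|w m'] ps ss us ms sz.
  by move: h3; rewrite -sz.
case/and3P: us => v1ws wvs ur.
move: v1ws wvs; rewrite in_cons negb_or mem_rcons in_cons negb_or mem_rcons in_cons negb_or.
case/andP => v1w /andP[v1vn v1m'] /andP[wvn wm'].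
have vnm' : vn \notin m'.
  by move: ur; change (uniq (rcons m' vn) -> vn \notin m'); rewrite rcons_uniq => /andP[].
move: ss; rewrite /= => /andP[Dv1w pw].
have Dv1vn : D v1 vn.
  case E : (D v1 vn) => //; exfalso; apply: ns => x y.
  have := (proj2 tD) v1 vn v1vn; rewrite E /= => Dvnv1.
  have cyc : cycle D (v1 :: w :: rcons m' vn).
    rewrite /cycle rcons_path /= Dv1w pw /= last_rcons //.
  by apply: (connect_cycle cyc).
exists [set v1; vn].
set X := [set v1; vn].
have wX : w \notin X by rewrite !inE negb_or eq_sym v1w wvn.
have m'X : all (fun x => x \notin X) m'.
  apply/allP => x xm; rewrite !inE negb_or; apply/andP; split.
  - by apply: contra v1m' => /eqP e; subst.
  - by apply: contra vnm' => /eqP e; subst.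
have cyc : cycle (invert D X) (v1 :: w :: rcons m' vn).
  rewrite /cycle rcons_path /=; apply/andP; split; last first.
    rewrite last_rcons /invert !inE !eqxx orbT /=; exact: Dv1vn.
  apply/andP; split.
    by rewrite /invert (negbTE wX) andbF.
  apply: (@transfer D _ (fun x => x \notin X)) => //.
  by move=> x y xX Dxy; rewrite /invert (negbTE xX).
move=> x y; exact: (connect_cycle cyc).
Qed.

End Aux.

Lemma part1 (T : finType) (D : rel T) : 3 <= #|T| -> tournament D ->
     (strong D -> sinv 1 D 0 /\ sinv' 1 D 0) /\
     (~ strong D -> sinv 1 D 1 /\ sinv' 1 D 1).
Proof.
move=> h3 tD; have h2 : 2 <= #|T| by apply: ltnW.
split.
- move=> sD; split; split=> //; exists [::]; split=> //=.
  + by apply/vs1.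
  + by apply/as1.
- move=> ns; case: (one_inv tD h3 ns) => X sX; split; split.
  + by exists [:: X]; split=> //=; apply/vs1.
  + by case=> [|Y Xs] //= /(vs1 D h2).
  + by exists [:: X]; split=> //=; apply/as1.
  + by case=> [|Y Xs] //= /(as1 D).
Qed.

Lemma strong_dec (T : finType) (D : rel T) : strong D \/ ~ strong D.
Proof.
case E: [forall u, forall v, connect D u v].
- by left => u v; move/forallP: E => /(_ u) /forallP /(_ v).
- right => H; move/negbT: E; apply/negP/negPn.
  by apply/forallP => u; apply/forallP => v; apply: H.
Qed.

Lemma le1 (T : finType) (D : rel T) w : 3 <= #|T| -> tournament D ->
  (sinv 1 D w -> w <= 1) /\ (sinv' 1 D w -> w <= 1).
Proof.
move=> h3 tD; have [h1 h2] := part1 h3 tD.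
case: (strong_dec D) => sD.
- case: (h1 sD) => a b; split=> h.
  + by rewrite -(sinv_uniq a h).
  + by rewrite -(sinv_uniq b h).
- case: (h2 sD) => a b; split=> h.
  + by rewrite -(sinv_uniq a h).
  + by rewrite -(sinv_uniq b h).
Qed.

Definition trans_t (n : nat) : rel 'I_n := fun x y => x < y.
Arguments trans_t n : clear implicits.

Lemma trans_tour n : tournament (trans_t n).
Proof.
split; first by move=> x; rewrite /trans_t ltnn.
move=> x y; rewrite /trans_t -val_eqE /= => nxy.
by case: (ltngtP x y) nxy.
Qed.

Lemma trans_ns n : 3 <= n -> ~ strong (trans_t n).
Proof.
case: n => [|[|n]] // _ H.
have := H (Ordinal (isT : 1 < n.+2)) (Ordinal (isT : 0 < n.+2)).
move=> C.
have Hc : forall a b : 'I_n.+2, 0 < a -> trans_t n.+2 a b -> 0 < b.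
  by move=> a b h1 hab; exact: leq_trans h1 (ltnW hab).
by have := @connect_closed' _ (trans_t n.+2) (fun x : 'I_n.+2 => 0 < x) (Ordinal (isT : 1 < n.+2)) _ Hc isT C.
Qed.

Theorem proposition5p1 :
  (forall (T : finType) (D : rel T), 3 <= #|T| -> tournament D ->
     (strong D -> sinv 1 D 0 /\ sinv' 1 D 0) /\
     (~ strong D -> sinv 1 D 1 /\ sinv' 1 D 1)) /\
  (forall n : nat, 3 <= n -> m_is sinv 1 n 1 /\ m_is sinv' 1 n 1) /\
  M_is sinv 1 1 /\ M_is sinv' 1 1.
Proof.
have ex : forall n, 3 <= n ->
    sinv 1 (trans_t n) 1 /\ sinv' 1 (trans_t n) 1.
  move=> n hn; apply: (proj2 (part1 _ (trans_tour n))).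
  - by rewrite card_ord.
  - exact: trans_ns.
split; first exact: part1.
split.
  move=> n hn; split; split.
  - by exists (trans_t n); split; [apply: trans_tour | case: (ex n hn)].
  - by move=> D w tD; apply: (proj1 (le1 w _ tD)); rewrite card_ord.
  - by exists (trans_t n); split; [apply: trans_tour | case: (ex n hn)].
  - by move=> D w tD; apply: (proj2 (le1 w _ tD)); rewrite card_ord.
split; split.
- by exists 3, (trans_t 3); split=> //; split; [apply: trans_tour | case: (ex 3 isT)].
- by move=> n D w hn tD; apply: (proj1 (le1 w _ tD)); rewrite card_ord.
- by exists 3, (trans_t 3); split=> //; split; [apply: trans_tour | case: (ex 3 isT)].
- by move=> n D w hn tD; apply: (proj2 (le1 w _ tD)); rewrite card_ord.
Qed.
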